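(* Let $\rho>0$, $\alpha>0$, $\Omega_t\in\mathbb{S}^n$, $\bar W_t\in\mathbb{S}^n_+$ with $\operatorname{tr}(\bar W_t)=1$, $P_t\in\mathbb{R}^{n\times r}$ with $P_t^\top P_t=I_r$, and integers $r_p\ge0$, $r_c\ge1$ with $r_p\le r$. Let $(W_t^\star,y_t^\star)$ be a minimizer of $\min_{W\in\hat{\mathcal W}(\bar W_t,P_t),y\in\mathbb{R}^m}\langle W-C,\Omega_t\rangle-\langle b-\mathcal{A}(\Omega_t),y\rangle+\frac1{2\alpha}\|W-C+\mathcal{A}^*(y)\|^2$, written as $W_t^\star=\gamma_t^\star\bar W_t+P_tS_t^\star P_t^\top$ with $S_t^\star\in\mathbb{S}^r_+$, $\gamma_t^\star\ge0$, $\gamma_t^\star+\operatorname{tr}(S_t^\star)\le\rho$, and let $X_{t+1}^\star:=\Omega_t+\frac1\alpha(W_t^\star-C+\mathcal{A}^*(y_t^\star))$. Write an eigendecomposition $S_t^\star=Q_1\Sigma_1Q_1^\top+Q_2\Sigma_2Q_2^\top$ where $[Q_1\ Q_2]$ is orthogonal, $\Sigma_1\in\mathbb{S}^{r_p}$ is diagonal with the $r_p$ largest eigenvalues of $S_t^\star$ and $\Sigma_2$ diagonal with the remaining ones. Let $V_t\in\mathbb{R}^{n\times r_c}$ have orthonormal columns that are eigenvectors of $-X_{t+1}^\star$ for its $r_c$ largest eigenvalues. Let $P_{t+1}$ be any matrix with orthonormal columns whose column space equals that of $[V_t\ \ P_tQ_1]$, assume $\gamma_t^\star+\operatorname{tr}(\Sigma_2)>0$,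 and set $\bar W_{t+1}:=\frac{1}{\gamma_t^\star+\operatorname{tr}(\Sigma_2)}\big(\gamma_t^\star\bar W_t+P_tQ_2\Sigma_2Q_2^\top P_t^\top\big)$. Then, writing $\hat F_{t}:=\hat F_{(\bar W_t,P_t)}$ and $\hat F_{t+1}:=\hat F_{(\bar W_{t+1},P_{t+1})}$: (i) $\hat F_{t+1}(X)\le F(X)$ for all $X\in\mathbb{S}^n$; (ii) $\hat F_{t+1}(X)\ge F(X_{t+1}^\star)+\langle g,X-X_{t+1}^\star\rangle$ for all $X\in\mathbb{S}^n$, where $g=C-\rho vv^\top$ with $v$ the first column of $V_t$ if $\lambda_{\max}(-X_{t+1}^\star)>0$, and $g=C$ otherwise (in both cases $g\in\partial F(X_{t+1}^\star)$); (iii) if $\mathcal{A}(\Omega_t)$ is arbitrary but $X\in\mathcal{X}_0$, then $\hat F_{t+1}(X)\ge \hat F_t(X_{t+1}^\star)+\langle \alpha(\Omega_t-X_{t+1}^\star),X-X_{t+1}^\star\rangle$ for all $X\in\mathcal{X}_0$.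
   Context: Data: $b\in\mathbb{R}^m$, $C,A_1,\dots,A_m\in\mathbb{S}^n$ with $A_1,\dots,A_m$ linearly independent; $\langle X,Y\rangle=\operatorname{tr}(XY)$, $\|\cdot\|$ Frobenius norm; $\mathcal{A}(X)=(\langle A_i,X\rangle)_{i=1}^m$, $\mathcal{A}^*(y)=\sum_iy_iA_i$; $\mathcal{X}_0:=\{X\in\mathbb{S}^n:\mathcal{A}(X)=b\}$. $F(X):=\langle C,X\rangle+\rho\max\{\lambda_{\max}(-X),0\}$. For $\bar W\succeq0$ with trace $1$ and $P$ with orthonormal columns ($k$ columns): $\hat{\mathcal W}(\bar W,P):=\{\gamma\bar W+PSP^\top: S\in\mathbb{S}^k_+,\gamma\ge0,\gamma+\operatorname{tr}(S)\le\rho\}$ and $\hat F_{(\bar W,P)}(X):=\langle C,X\rangle+\max_{W\in\hat{\mathcal W}(\bar W,P)}\langle W,-X\rangle$. ($X_{t+1}^\star$ is the minimizer over $\mathcal{X}_0$ of $\hat F_t(X)+\frac\alpha2\|X-\Omega_t\|^2$.) *)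

(* Defs.v *)
From HB Require Import structures.
From mathcomp Require Import all_boot all_order all_algebra.
From mathcomp Require Import boolp classical_sets reals.
Set Implicit Arguments. Unset Strict Implicit. Unset Printing Implicit Defensive.
Import Order.TTheory GRing.Theory Num.Theory.
Local Open Scope ring_scope.
Local Open Scope classical_set_scope.

Section Defs.
Variable R : realType.

Definition psd k (M : 'M[R]_k) : Prop :=
  M^T = M /\ forall v : 'cV[R]_k, 0 <= (v^T *m M *m v) ord0 ord0.

Definition inner n (X Y : 'M[R]_n) : R := \tr (X *m Y).

Definition frob2 n (X : 'M[R]_n) : R := \tr (X^T *m X).

Definition vdot m (u v : 'cV[R]_m) : R := \sum_i u i ord0 * v i ord0.

Definition lambda_max n (M : 'M[R]_n) : R := sup [set a : R | eigenvalue M a].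

Definition Fobj n (C : 'M[R]_n) (rho : R) (X : 'M[R]_n) : R :=
  inner C X + rho * Num.max (lambda_max (- X)) 0.

Definition What n k (rho : R) (Wbar : 'M[R]_n) (P : 'M[R]_(n, k)) : set 'M[R]_n :=
  [set W | exists (gamma : R) (S : 'M[R]_k),
     [/\ psd S, 0 <= gamma, gamma + \tr S <= rho & W = gamma *: Wbar + P *m S *m P^T]].

Definition Fhat n k (C : 'M[R]_n) (rho : R) (Wbar : 'M[R]_n) (P : 'M[R]_(n, k))
    (X : 'M[R]_n) : R :=
  inner C X + sup [set inner W (- X) | W in What rho Wbar P].

Definition Aop n m (A : 'I_m -> 'M[R]_n) (X : 'M[R]_n) : 'cV[R]_m :=
  \col_i inner (A i) X.
Definition Astar n m (A : 'I_m -> 'M[R]_n) (y : 'cV[R]_m) : 'M[R]_n :=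
  \sum_i y i ord0 *: A i.

Definition dual_obj n m (A : 'I_m -> 'M[R]_n) (b : 'cV[R]_m) (C Omega : 'M[R]_n)
    (alpha : R) (W : 'M[R]_n) (y : 'cV[R]_m) : R :=
  inner (W - C) Omega - vdot (b - Aop A Omega) y
  + (2 * alpha)^-1 * frob2 (W - C + Astar A y).

End Defs.

(* Main.v *)
Require Import Defs.
From HB Require Import structures.
From mathcomp Require Import all_boot all_order all_algebra.
From mathcomp Require Import boolp classical_sets reals.
From mathcomp Require Import ring lra.
Import Order.TTheory GRing.Theory Num.Theory.
Local Open Scope ring_scope.
Local Open Scope classical_set_scope.
Set Implicit Arguments. Unset Strict Implicit. Unset Printing Implicit Defensive.

Section Basics.
Variable R : realType.

Definition bil n (M : 'M[R]_n) (v w : 'cV[R]_n) : R := (v^T *m M *m w) ord0 ord0.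
Definition nrm2 n (v : 'cV[R]_n) : R := (v^T *m v) ord0 ord0.

Lemma bilE n (M : 'M[R]_n) v w :
  bil M v w = \sum_i \sum_j v i ord0 * M i j * w j ord0.
Proof.
rewrite /bil mxE exchange_big; apply: eq_bigr => i _; rewrite mxE big_distrl /=.
by apply: eq_bigr => j _; rewrite !mxE.
Qed.

Lemma nrm2E n (v : 'cV[R]_n) : nrm2 v = \sum_i v i ord0 ^+ 2.
Proof. by rewrite /nrm2 mxE; apply: eq_bigr => i _; rewrite mxE expr2. Qed.

Lemma nrm2_ge0 n (v : 'cV[R]_n) : 0 <= nrm2 v.
Proof. by rewrite nrm2E sumr_ge0 // => i _; rewrite sqr_ge0. Qed.

Lemma nrm2_eq0 n (v : 'cV[R]_n) : nrm2 v = 0 -> v = 0.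
Proof.
rewrite nrm2E => /eqP; rewrite psumr_eq0 => [/allP H|i _]; last exact: sqr_ge0.
apply/matrixP => i j; rewrite (ord1 j) mxE.
by have /= := H i (mem_index_enum _); rewrite sqrf_eq0 => /eqP.
Qed.

Lemma coord_le_nrm2 n (v : 'cV[R]_n) i : v i ord0 ^+ 2 <= nrm2 v.
Proof.
rewrite nrm2E (bigD1 i) //= lerDl sumr_ge0 // => j _; exact: sqr_ge0.
Qed.

Lemma bil_sym n (M : 'M[R]_n) v w : M^T = M -> bil M w v = bil M v w.
Proof.
move=> sM; have tr1 (X : 'M[R]_1) : X ord0 ord0 = X^T ord0 ord0 by rewrite mxE.
by rewrite /bil tr1 !trmx_mul trmxK sM mulmxA.
Qed.


Lemma bilDl n (M : 'M[R]_n) a b w : bil M (a + b) w = bil M a w + bil M b w.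
Proof. by rewrite /bil linearD /= !mulmxDl mxE. Qed.
Lemma bilDr n (M : 'M[R]_n) a b w : bil M w (a + b) = bil M w a + bil M w b.
Proof. by rewrite /bil mulmxDr mxE. Qed.
Lemma bilZl n (M : 'M[R]_n) t a w : bil M (t *: a) w = t * bil M a w.
Proof. by rewrite /bil linearZ /= -!scalemxAl mxE. Qed.
Lemma bilZr n (M : 'M[R]_n) t a w : bil M w (t *: a) = t * bil M w a.
Proof. by rewrite /bil -!scalemxAr mxE. Qed.

Lemma quad_disc (A B C : R) : 0 <= C ->
  (forall t, 0 <= A + 2 * t * B + t ^+ 2 * C) -> B ^+ 2 <= A * C.
Proof.
move=> C0 H; have [C0'|Cn0] := eqVneq C 0.
  rewrite C0' in H; rewrite C0'.
  have [->|Bn0] := eqVneq B 0; first by rewrite expr0n mulr0.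
  have h := H (- (A + 1) / (2 * B)).
  have e : A + 2 * (- (A + 1) / (2 * B)) * B + (- (A + 1) / (2 * B)) ^+ 2 * 0 = -1.
    by field; rewrite Bn0.
  by rewrite e ler0N1 in h.
have Cp : 0 < C by rewrite lt_def Cn0.
have h := H (- B / C).
have e : A + 2 * (- B / C) * B + (- B / C) ^+ 2 * C = (A * C - B ^+ 2) / C.
  by field.
rewrite e pmulr_lge0 ?invr_gt0 // subr_ge0 in h; exact h.
Qed.

Lemma cauchy_schwarz n (M : 'M[R]_n) a b : M^T = M -> (forall v, 0 <= bil M v v) ->
  bil M a b ^+ 2 <= bil M a a * bil M b b.
Proof.
move=> sM psdM; apply: quad_disc => // t.
have := psdM (a + t *: b).
by rewrite bilDl !bilDr !bilZl !bilZr (bil_sym _ _ sM); congr (_ <= _); ring.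
Qed.

Definition mabs n (M : 'M[R]_n) : R := \sum_i \sum_j `|M i j|.

Lemma mabs_ge0 n (M : 'M[R]_n) : 0 <= mabs M.
Proof. by apply: sumr_ge0 => i _; apply: sumr_ge0. Qed.

Lemma bil_bound n (M : 'M[R]_n) v : `|bil M v v| <= mabs M * nrm2 v.
Proof.
rewrite bilE /mabs mulr_suml; apply: (le_trans (ler_norm_sum _ _ _)).
apply: ler_sum => i _; rewrite mulr_suml; apply: (le_trans (ler_norm_sum _ _ _)).
apply: ler_sum => j _; rewrite !normrM.
rewrite (_ : _ * _ * _ = `|M i j| * (`|v i ord0| * `|v j ord0|)); last by ring.
apply: ler_wpM2l => //.
have h1 := coord_le_nrm2 v i; have h2 := coord_le_nrm2 v j.
rewrite -(real_normK (num_real (v i ord0))) in h1.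
rewrite -(real_normK (num_real (v j ord0))) in h2.
set x := `|v i ord0| in h1 *; set y := `|v j ord0| in h2 *.
have := sqr_ge0 (x - y); nra.
Qed.


Lemma bil0l n (M : 'M[R]_n) w : bil M 0 w = 0.
Proof. by rewrite /bil trmx0 !mul0mx mxE. Qed.

Lemma bilBm n (M N : 'M[R]_n) v w : bil (M - N) v w = bil M v w - bil N v w.
Proof. by rewrite /bil mulmxBr mulmxBl !mxE. Qed.

Lemma bil_scalar n (a : R) v w : bil (a%:M : 'M[R]_n) v w = a * (v^T *m w) ord0 ord0.
Proof. by rewrite /bil mul_mx_scalar -scalemxAl mxE. Qed.

Lemma bilM n (M N : 'M[R]_n) v w : bil (M *m N) v w = ((v^T *m M) *m (N *m w)) ord0 ord0.
Proof. by rewrite /bil !mulmxA. Qed.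

Lemma my_sup_ge (E : set R) x B : (forall y, E y -> y <= B) -> E x -> x <= sup E.
Proof.
move=> hB Ex; have h : has_ubound E by exists B => y /hB.
exact: (ub_le_sup h Ex).
Qed.

Lemma my_sup_le (E : set R) x B : (forall y, E y -> y <= B) -> E x -> sup E <= B.
Proof. by move=> hB Ex; apply: ge_sup; [exists x | exact: hB]. Qed.

Lemma rayleigh n (M : 'M[R]_n.+1) : M^T = M -> exists mu (u : 'cV[R]_n.+1),
  [/\ u != 0, M *m u = mu *: u & forall v, bil M v v <= mu * nrm2 v].
Proof.
move=> sM.
pose E := [set bil M v v / nrm2 v | v in [set v : 'cV[R]_n.+1 | v != 0]].
have npos (v : 'cV[R]_n.+1) : v != 0 -> 0 < nrm2 v.
  move=> vn0; rewrite lt_def nrm2_ge0 andbT; apply/eqP => /nrm2_eq0 h.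
  by rewrite h eqxx in vn0.
have Eub y : E y -> y <= mabs M.
  case=> v /= vn0 <-; rewrite ler_pdivrMr ?npos //.
  exact: le_trans (ler_norm _) (bil_bound _ _).
have v1n0 : (const_mx 1 : 'cV[R]_n.+1) != 0.
  apply/eqP => /matrixP /(_ ord0 ord0); rewrite !mxE; apply/eqP; exact: oner_neq0.
pose one : 'cV[R]_n.+1 := const_mx 1.
have E1 : E (bil M one one / nrm2 one) by exists one.
set mu := sup E.
have Hub v : bil M v v <= mu * nrm2 v.
  have [->|vn0] := eqVneq v 0; first by rewrite bil0l /nrm2 trmx0 mul0mx mxE mulr0.
  rewrite -ler_pdivrMr ?npos //; apply: (my_sup_ge Eub); by exists v.
exists mu.
pose K := mu%:M - M.
have sK : K^T = K by rewrite /K linearB /= tr_scalar_mx sM.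
have bK v : bil K v v = mu * nrm2 v - bil M v v by rewrite /K bilBm bil_scalar.
have psdK v : 0 <= bil K v v by rewrite bK subr_ge0.
have nunit : ~~ (M - mu%:M \in unitmx).
  apply/negP => Hu.
  pose J := - invmx (M - mu%:M).
  have KJ : K *m J = 1%:M by rewrite /J /K mulmxN -mulNmx opprB mulmxV.
  have JK : J^T *m K = 1%:M by rewrite -sK -trmx_mul KJ tr_scalar_mx.
  pose c := mabs J + 1.
  have cpos : 0 < c by rewrite /c ltr_wpDl ?mabs_ge0.
  have key v : v != 0 -> nrm2 v <= c * bil K v v.
    move=> vn0.
    have e1 : bil K (J *m v) v = nrm2 v by rewrite /bil trmx_mul -(mulmxA _ J^T K) JK mulmx1.
    have e2 : bil K (J *m v) (J *m v) = bil J v v.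
      by rewrite /bil trmx_mul -(mulmxA _ J^T K) JK mulmx1 mulmxA.
    have cs := cauchy_schwarz (J *m v) v sK psdK.
    rewrite e1 e2 in cs.
    have hb : bil J v v <= mabs J * nrm2 v := le_trans (ler_norm _) (bil_bound _ _).
    have np := npos v vn0. have pk := psdK v.
    have : nrm2 v ^+ 2 <= mabs J * nrm2 v * bil K v v.
      apply: le_trans cs _; exact: ler_wpM2r.
    rewrite /c expr2 => h2.
    have h3 : nrm2 v <= mabs J * bil K v v.
      by rewrite -(ler_pM2r np); rewrite mulrAC.
    nra.
  have ub : forall y, E y -> y <= mu - c^-1.
    move=> y [v /= vn0 <-]; rewrite ler_pdivrMr ?npos //.
    have := key v vn0; rewrite bK.
    have np := npos v vn0.
    rewrite mulrBl; move=> h; rewrite -ler_pdivrMl // in h.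
    rewrite mulrC; lra.
  have := my_sup_le ub E1; rewrite -/mu.
  have : 0 < c^-1 by rewrite invr_gt0. lra.
have : eigenvalue M mu.
  by rewrite /eigenvalue /eigenspace kermx_eq0 row_free_unit.
move=> /eigenvalueP [z zM zn0].
exists z^T; split => //.
- by apply: contra zn0 => /eqP h; apply/eqP; rewrite -[z]trmxK h trmx0.
- by rewrite -sM -trmx_mul zM linearZ.
Qed.


Lemma nrm2_pos n (v : 'cV[R]_n) : v != 0 -> 0 < nrm2 v.
Proof.
move=> vn0; rewrite lt_def nrm2_ge0 andbT; apply/eqP => /nrm2_eq0 h.
by rewrite h eqxx in vn0.
Qed.

Lemma lmax_eq n (M : 'M[R]_n.+1) mu (u : 'cV[R]_n.+1) : M^T = M -> u != 0 -> M *m u = mu *: u ->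
  (forall v, bil M v v <= mu * nrm2 v) -> lambda_max M = mu.
Proof.
move=> sM un0 Mu Hub.
have Emu : eigenvalue M mu.
  apply/eigenvalueP; exists u^T.
    by rewrite -[M]sM -trmx_mul Mu linearZ.
  by apply: contra un0 => /eqP h; apply/eqP; rewrite -[u]trmxK h trmx0.
have ub a : eigenvalue M a -> a <= mu.
  move=> /eigenvalueP [z zM zn0].
  have zt0 : z^T != 0 by apply: contra zn0 => /eqP h; apply/eqP; rewrite -[z]trmxK h trmx0.
  have e : nrm2 z^T = (z *m z^T) ord0 ord0 by rewrite /nrm2 trmxK.
  have := Hub z^T; rewrite /bil trmxK zM -scalemxAl mxE -e.
  by rewrite ler_pM2r ?nrm2_pos.
apply/le_anti; rewrite (my_sup_le ub Emu) /=.
exact: (my_sup_ge ub Emu).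
Qed.

Lemma lmax_rayleigh n (M : 'M[R]_n) : M^T = M -> forall v, bil M v v <= lambda_max M * nrm2 v.
Proof.
case: n M => [|n] M sM v.
  by rewrite /bil /nrm2 !mxE !big_ord0 mulr0.
have [mu [u [un0 Mu Hub]]] := rayleigh sM.
by rewrite (lmax_eq sM un0 Mu Hub).
Qed.

Lemma lmax_eig n (M : 'M[R]_n.+1) : M^T = M ->
  exists u : 'cV[R]_n.+1, u != 0 /\ M *m u = lambda_max M *: u.
Proof.
move=> sM; have [mu [u [un0 Mu Hub]]] := rayleigh sM.
by exists u; rewrite (lmax_eq sM un0 Mu Hub).
Qed.


Lemma psd_bil n (W : 'M[R]_n) v : psd W -> 0 <= bil W v v.
Proof. by case=> _ h; exact: h. Qed.

Lemma bil_rank1 n (u v : 'cV[R]_n) :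
  bil (u *m u^T) v v = (u^T *m v) ord0 ord0 ^+ 2.
Proof.
rewrite /bil !mulmxA -(mulmxA (v^T *m u)) mxE big_ord1 expr2; congr (_ * _).
by rewrite (_ : u^T *m v = (v^T *m u)^T) ?mxE // trmx_mul trmxK.
Qed.

Lemma tr_rank1 n (u : 'cV[R]_n) K : \tr (u *m u^T *m K) = bil K u u.
Proof. by rewrite -mulmxA mxtrace_mulC trace_mx11. Qed.

Lemma bilZm n (M : 'M[R]_n) a v w : bil (a *: M) v w = a * bil M v w.
Proof. by rewrite /bil -scalemxAr -scalemxAl mxE. Qed.

Lemma psd_zero n (W : 'M[R]_n) : W^T = W -> (forall v, bil W v v = 0) -> W = 0.
Proof.
move=> sW h.
have psdW v : 0 <= bil W v v by rewrite h.
have Wb (b : 'cV[R]_n) : W *m b = 0.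
  apply: nrm2_eq0; have := cauchy_schwarz (W *m b) b sW psdW.
  rewrite !h mulr0.
  have -> : bil W (W *m b) b = nrm2 (W *m b) by rewrite /bil /nrm2 trmx_mul sW !mulmxA.
  move=> hh; apply/eqP; rewrite -sqrf_eq0 eq_le hh sqr_ge0 //.
apply/matrixP => i j; have := Wb (delta_mx j ord0).
rewrite -colE => /matrixP /(_ i ord0); by rewrite !mxE.
Qed.

Lemma trace_psd n (W K : 'M[R]_n) : psd W -> psd K -> 0 <= \tr (W *m K).
Proof.
case: n W K => [|n] W K psdW psdK.
  by rewrite /mxtrace big_ord0.
move: {2}(\rank W) (leqnn (\rank W)) => p; elim: p W psdW => [|p IH] W psdW hr.
  move: hr; rewrite leqn0 mxrank_eq0 => /eqP ->; by rewrite mul0mx linear0.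
have sW : W^T = W by case: psdW.
have [mu [u [un0 Wu Hub]]] := rayleigh sW.
have np := nrm2_pos un0.
have mu0 : 0 <= mu.
  have := psd_bil u psdW.
  rewrite /bil -mulmxA Wu -scalemxAr mxE -/(nrm2 u) pmulr_lge0 //.
have [mueq0|mun0] := eqVneq mu 0.
  have -> : W = 0.
    apply: psd_zero => // v; apply/eqP; rewrite eq_le psd_bil // andbT.
    by have := Hub v; rewrite mueq0 mul0r.
  by rewrite mul0mx linear0.
have mup : 0 < mu by rewrite lt_def mun0.
pose c := mu / nrm2 u.
pose W' := W - c *: (u *m u^T).
have uW : u^T *m W = mu *: u^T by rewrite -sW -trmx_mul Wu linearZ.
have sW' : W'^T = W' by rewrite /W' linearB /= linearZ /= trmx_mul trmxK sW.
have psdW' : psd W'.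
  split=> // v; change (0 <= bil W' v v); rewrite /W' bilBm bilZm bil_rank1.
  set s := (u^T *m v) ord0 ord0.
  have cs := cauchy_schwarz u v sW (fun x => psd_bil x psdW).
  have e1 : bil W u v = mu * s by rewrite /bil uW -scalemxAl mxE.
  have e2 : bil W u u = mu * nrm2 u by rewrite /bil uW -scalemxAl mxE.
  rewrite e1 e2 in cs.
  have hq := psd_bil v psdW.
  rewrite subr_ge0 /c mulrAC ler_pdivrMr //.
  have : mu * (mu * s ^+ 2) <= mu * (nrm2 u * bil W v v).
    by move: cs; rewrite exprMn expr2 -!mulrA.
  by rewrite ler_pM2l // [bil W v v * _]mulrC.
have W'u : W' *m u = 0.
  rewrite /W' mulmxBl Wu -scalemxAl -mulmxA -/(nrm2 u).
  have -> : u^T *m u = (nrm2 u)%:M.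
    by apply/matrixP => i j; rewrite (ord1 i) (ord1 j) [in RHS]mxE eqxx mulr1n.
  rewrite mul_mx_scalar scalerA /c divfK ?subrr //.
  by rewrite gt_eqF.
have sub : (W' <= W)%MS.
  have -> : W' = (1%:M - (c / mu) *: (u *m u^T)) *m W.
    rewrite mulmxBl mul1mx -scalemxAl -mulmxA uW -scalemxAr scalerA.
    by rewrite divfK // gt_eqF.
  exact: submxMl.
have lt : (\rank W' < \rank W)%N.
  have := mxrank_leqif_sup sub; rewrite /leqif => -[le eqv].
  rewrite ltn_neqAle le andbT eqv; apply/negP => /submxP [D hD].
  move: Wu; rewrite hD -mulmxA W'u mulmx0 => /esym /eqP.
  by rewrite scaler_eq0 gt_eqF //= (negbTE un0).
have -> : W = W' + c *: (u *m u^T) by rewrite /W' subrK.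
rewrite mulmxDl linearD /= -scalemxAl linearZ /= tr_rank1.
apply: addr_ge0.
  apply: IH => //; rewrite -ltnS; exact: leq_trans lt hr.
apply: mulr_ge0; first by rewrite /c divr_ge0 // ltW.
exact: psd_bil.
Qed.


Lemma psd_bilE n (W : 'M[R]_n) : W^T = W -> (forall v, 0 <= bil W v v) -> psd W.
Proof. by move=> sW h; split. Qed.

Lemma psd_congr n k (S : 'M[R]_k) (Q : 'M[R]_(n, k)) : psd S -> psd (Q *m S *m Q^T).
Proof.
case=> sS hS; split.
  by rewrite !trmx_mul trmxK sS mulmxA.
move=> v; have := hS (Q^T *m v).
by rewrite trmx_mul trmxK !mulmxA.
Qed.

Lemma psdD n (A B : 'M[R]_n) : psd A -> psd B -> psd (A + B).
Proof.
case=> sA hA [sB hB]; split; first by rewrite linearD /= sA sB.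
move=> v; rewrite mulmxDr mulmxDl mxE; exact: addr_ge0.
Qed.

Lemma psdZ n (A : 'M[R]_n) a : 0 <= a -> psd A -> psd (a *: A).
Proof.
move=> a0 [sA hA]; split; first by rewrite linearZ /= sA.
move=> v; rewrite -scalemxAr -scalemxAl mxE; exact: mulr_ge0.
Qed.

Lemma psd0 n : psd (0 : 'M[R]_n).
Proof. by split; [rewrite trmx0 | move=> v; rewrite mulmx0 mul0mx mxE]. Qed.

Lemma psd_rank1 n (w : 'cV[R]_n) : psd (w *m w^T).
Proof.
split; first by rewrite trmx_mul trmxK.
move=> v; have := bil_rank1 w v; rewrite /bil => ->; exact: sqr_ge0.
Qed.

Lemma psd1 n : psd (1%:M : 'M[R]_n).
Proof. split; [exact: tr_scalar_mx | move=> v; rewrite mulmx1; exact: nrm2_ge0]. Qed.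

Lemma trace_psd_ge0 n (W : 'M[R]_n) : psd W -> 0 <= \tr W.
Proof. by move=> pW; have := trace_psd pW (psd1 n); rewrite mulmx1. Qed.

Lemma tr_le_lmax n (W M : 'M[R]_n) : psd W -> M^T = M ->
  \tr (W *m M) <= lambda_max M * \tr W.
Proof.
move=> pW sM.
have pK : psd ((lambda_max M)%:M - M).
  split; first by rewrite linearB /= tr_scalar_mx sM.
  move=> v; change (0 <= bil ((lambda_max M)%:M - M) v v).
  by rewrite bilBm bil_scalar subr_ge0; exact: lmax_rayleigh.
have := trace_psd pW pK.
by rewrite mulmxBr linearB /= mul_mx_scalar mxtraceZ subr_ge0.
Qed.

Lemma max_ge0 (x : R) : 0 <= Num.max x 0.
Proof. by rewrite le_max lexx orbT. Qed.

Lemma le_max_l (x : R) : x <= Num.max x 0.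
Proof. by rewrite le_max lexx. Qed.

Lemma tr_le_max n (W M : 'M[R]_n) (rho : R) : psd W -> M^T = M -> \tr W <= rho ->
  \tr (W *m M) <= rho * Num.max (lambda_max M) 0.
Proof.
move=> pW sM hr; apply: (le_trans (tr_le_lmax pW sM)).
have t0 := trace_psd_ge0 pW.
apply: (@le_trans _ _ (Num.max (lambda_max M) 0 * \tr W)).
  exact: ler_wpM2r (le_max_l _).
by rewrite mulrC; apply: ler_wpM2r; [exact: max_ge0|].
Qed.

Lemma What_psd n k rho (Wb : 'M[R]_n) (P : 'M[R]_(n, k)) W :
  psd Wb -> \tr Wb = 1 -> P^T *m P = 1%:M -> What rho Wb P W ->
  psd W /\ \tr W <= rho.
Proof.
move=> pWb tWb PP [g [S [pS g0 hg ->]]]; split.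
  apply: psdD; [exact: psdZ | exact: psd_congr].
rewrite mxtraceD mxtraceZ tWb mulr1 mxtrace_mulC mulmxA PP mul1mx //.
Qed.

Lemma What0 n k rho (Wb : 'M[R]_n) (P : 'M[R]_(n, k)) : 0 <= rho -> What rho Wb P 0.
Proof.
move=> r0; exists 0, 0; split; [exact: psd0|by []|by rewrite linear0 addr0|].
by rewrite scale0r mulmx0 mul0mx addr0.
Qed.

Lemma Fhat_le n k (C : 'M[R]_n) rho (Wb : 'M[R]_n) (P : 'M[R]_(n, k)) X :
  0 <= rho -> psd Wb -> \tr Wb = 1 -> P^T *m P = 1%:M -> X^T = X ->
  Fhat C rho Wb P X <= inner C X + rho * Num.max (lambda_max (- X)) 0.
Proof.
move=> r0 pWb tWb PP sX; rewrite /Fhat lerD2l.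
have ub y : [set inner W (- X) | W in What rho Wb P] y -> y <= rho * Num.max (lambda_max (- X)) 0.
  case=> W hW <-; have [pW tW] := What_psd pWb tWb PP hW.
  by apply: tr_le_max => //; rewrite linearN /= sX.
apply: (my_sup_le ub); exists 0; [exact: What0 | by []].
Qed.

Lemma Fhat_ge n k (C : 'M[R]_n) rho (Wb : 'M[R]_n) (P : 'M[R]_(n, k)) X W :
  0 <= rho -> psd Wb -> \tr Wb = 1 -> P^T *m P = 1%:M -> X^T = X -> What rho Wb P W ->
  inner C X + inner W (- X) <= Fhat C rho Wb P X.
Proof.
move=> r0 pWb tWb PP sX hW; rewrite /Fhat lerD2l.
have ub y : [set inner W (- X) | W in What rho Wb P] y -> y <= rho * Num.max (lambda_max (- X)) 0.
  case=> W' hW' <-; have [pW tW] := What_psd pWb tWb PP hW'.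
  by apply: tr_le_max => //; rewrite linearN /= sX.
by apply: (my_sup_ge ub); exists W.
Qed.

Lemma quad_pos (a c : R) : 0 <= c -> (forall t, 0 < t -> t <= 1 -> 0 <= t * a + t ^+ 2 * c) -> 0 <= a.
Proof.
move=> c0 H; rewrite leNgt; apply/negP => a0.
pose t := - a / (- a + c + 1).
have dp : 0 < - a + c + 1 by lra.
have tp : 0 < t by rewrite /t divr_gt0 // oppr_gt0.
have t1 : t <= 1 by rewrite /t ler_pdivrMr // mul1r; lra.
have := H t tp t1.
have -> : t * a + t ^+ 2 * c = t * (a * (1 - a) / (- a + c + 1)).
  rewrite /t; field; lra.
rewrite pmulr_rge0 // pmulr_lge0 ?invr_gt0 //; nra.
Qed.

Lemma quad_zero (a c : R) : 0 <= c -> (forall t, 0 <= t * a + t ^+ 2 * c) -> a = 0.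
Proof.
move=> c0 H; apply/eqP; rewrite eq_le; apply/andP; split.
  rewrite -oppr_ge0; apply: (quad_pos c0) => t _ _.
  by have := H (- t); rewrite sqrrN mulrN mulNr.
by apply: (quad_pos c0) => t _ _.
Qed.


Lemma proj_col n k p (Pn : 'M[R]_(n, k)) (Y : 'M[R]_(n, p)) :
  Pn^T *m Pn = 1%:M -> (Y^T <= Pn^T)%MS -> Pn *m Pn^T *m Y = Y.
Proof.
move=> PP /submxP [D hD].
have -> : Y = Pn *m D^T by rewrite -[Y]trmxK hD trmx_mul trmxK.
by rewrite -(mulmxA Pn) (mulmxA Pn^T) PP mul1mx.
Qed.


Lemma frob2_ge0 n (X : 'M[R]_n) : 0 <= frob2 X.
Proof.
have := trace_psd_ge0 (psd_congr X^T (psd1 n)).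
by rewrite mulmx1 trmxK.
Qed.

Lemma frob2_exp n (Z Y : 'M[R]_n) t :
  frob2 (Z + t *: Y) = frob2 Z + 2 * t * \tr (Z^T *m Y) + t ^+ 2 * frob2 Y.
Proof.
rewrite /frob2 (_ : (Z + t *: Y)^T = Z^T + t *: Y^T); last by rewrite linearD /= linearZ.
rewrite mulmxDl mulmxDr mulmxDr -!scalemxAl -!scalemxAr.
rewrite !mxtraceD !mxtraceZ.
have -> : \tr (Y^T *m Z) = \tr (Z^T *m Y) by rewrite -mxtrace_tr trmx_mul trmxK.
ring.
Qed.

Lemma innerDl n (X Y Z : 'M[R]_n) : inner (X + Y) Z = inner X Z + inner Y Z.
Proof. by rewrite /inner mulmxDl mxtraceD. Qed.
Lemma innerDr n (X Y Z : 'M[R]_n) : inner Z (X + Y) = inner Z X + inner Z Y.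
Proof. by rewrite /inner mulmxDr mxtraceD. Qed.
Lemma innerZl n (X Z : 'M[R]_n) a : inner (a *: X) Z = a * inner X Z.
Proof. by rewrite /inner -scalemxAl mxtraceZ. Qed.
Lemma innerZr n (X Z : 'M[R]_n) a : inner Z (a *: X) = a * inner Z X.
Proof. by rewrite /inner -scalemxAr mxtraceZ. Qed.
Lemma innerNl n (X Z : 'M[R]_n) : inner (- X) Z = - inner X Z.
Proof. by rewrite /inner mulNmx linearN. Qed.
Lemma innerNr n (X Z : 'M[R]_n) : inner Z (- X) = - inner Z X.
Proof. by rewrite /inner mulmxN linearN. Qed.
Lemma innerBl n (X Y Z : 'M[R]_n) : inner (X - Y) Z = inner X Z - inner Y Z.
Proof. by rewrite innerDl innerNl. Qed.
Lemma innerBr n (X Y Z : 'M[R]_n) : inner Z (X - Y) = inner Z X - inner Z Y.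
Proof. by rewrite innerDr innerNr. Qed.
Lemma innerC n (X Z : 'M[R]_n) : inner X Z = inner Z X.
Proof. exact: mxtrace_mulC. Qed.

Lemma AstarD n m (A : 'I_m -> 'M[R]_n) y z : Astar A (y + z) = Astar A y + Astar A z.
Proof. by rewrite /Astar -big_split; apply: eq_bigr => i _; rewrite mxE scalerDl. Qed.
Lemma AstarZ n m (A : 'I_m -> 'M[R]_n) t y : Astar A (t *: y) = t *: Astar A y.
Proof. by rewrite /Astar scaler_sumr; apply: eq_bigr => i _; rewrite mxE scalerA. Qed.
Lemma Astar_delta n m (A : 'I_m -> 'M[R]_n) i : Astar A (delta_mx i ord0) = A i.
Proof.
rewrite /Astar (bigD1 i) //= mxE !eqxx scale1r big1 ?addr0 // => j /negbTE ji.
by rewrite mxE ji scale0r.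
Qed.
Lemma Astar_sym n m (A : 'I_m -> 'M[R]_n) y : (forall i, (A i)^T = A i) ->
  (Astar A y)^T = Astar A y.
Proof.
by move=> sA; rewrite /Astar linear_sum; apply: eq_bigr => i _; rewrite linearZ /= sA.
Qed.
Lemma inner_Astar n m (A : 'I_m -> 'M[R]_n) y X :
  inner (Astar A y) X = \sum_i y i ord0 * inner (A i) X.
Proof.
rewrite /inner /Astar mulmx_suml linear_sum; apply: eq_bigr => i _.
by rewrite -scalemxAl; exact: mxtraceZ.
Qed.

Lemma vdotD m (u y z : 'cV[R]_m) : vdot u (y + z) = vdot u y + vdot u z.
Proof. by rewrite /vdot -big_split; apply: eq_bigr => i _; rewrite mxE mulrDr. Qed.
Lemma vdotZ m (u y : 'cV[R]_m) t : vdot u (t *: y) = t * vdot u y.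
Proof. by rewrite /vdot mulr_sumr; apply: eq_bigr => i _; rewrite mxE mulrCA. Qed.
Lemma vdot_delta m (u : 'cV[R]_m) i : vdot u (delta_mx i ord0) = u i ord0.
Proof.
rewrite /vdot (bigD1 i) //= mxE !eqxx mulr1 big1 ?addr0 // => j /negbTE ji.
by rewrite mxE ji mulr0.
Qed.


Lemma dual_y_exp n m (A : 'I_m -> 'M[R]_n) b C Om alpha W y e t : alpha != 0 ->
  dual_obj A b C Om alpha W (y + t *: e) = dual_obj A b C Om alpha W y
   + t * (- vdot (b - Aop A Om) e + alpha^-1 * \tr ((W - C + Astar A y)^T *m Astar A e))
   + t ^+ 2 * ((2 * alpha)^-1 * frob2 (Astar A e)).
Proof.
move=> a0; rewrite /dual_obj vdotD vdotZ AstarD AstarZ addrA frob2_exp.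
field; exact: a0.
Qed.

Lemma dual_W_exp n m (A : 'I_m -> 'M[R]_n) b C Om alpha W D y t : alpha != 0 ->
  dual_obj A b C Om alpha (W + t *: D) y = dual_obj A b C Om alpha W y
   + t * (inner D Om + alpha^-1 * \tr ((W - C + Astar A y)^T *m D))
   + t ^+ 2 * ((2 * alpha)^-1 * frob2 D).
Proof.
move=> a0; rewrite /dual_obj.
have -> : W + t *: D - C + Astar A y = (W - C + Astar A y) + t *: D.
  by rewrite -!addrA; congr (_ + _); rewrite addrC -addrA.
have -> : W + t *: D - C = (W - C) + t *: D by rewrite addrAC.
rewrite (innerDl (W - C)) innerZl frob2_exp.
field; exact: a0.
Qed.


Lemma lmax_eig' n (M : 'M[R]_n) : (0 < n)%N -> M^T = M ->
  exists u : 'cV[R]_n, u != 0 /\ M *m u = lambda_max M *: u.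
Proof. by case: n M => // n M _; exact: lmax_eig. Qed.

Lemma diag_delta p (d : 'rV[R]_p) i : diag_mx d *m (delta_mx i ord0 : 'cV[R]_p) = d ord0 i *: delta_mx i ord0.
Proof.
apply/matrixP => a c; rewrite mul_diag_mx !mxE (ord1 c) eqxx !andbT.
by case: eqP => [->|]; rewrite ?mulr1 ?mulr0.
Qed.

Lemma delta_nrm p (i : 'I_p) : ((delta_mx i ord0 : 'cV[R]_p)^T *m (delta_mx i ord0 : 'cV[R]_p)) ord0 ord0 = 1.
Proof. by rewrite trmx_delta mul_delta_mx mxE !eqxx. Qed.

Lemma top_eig n p (M : 'M[R]_n) (V : 'M[R]_(n, p.+1)) (d : 'rV[R]_p.+1) :
  M^T = M -> V^T *m V = 1%:M -> M *m V = V *m diag_mx d ->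
  (forall i j : 'I_p.+1, (i <= j)%N -> d ord0 j <= d ord0 i) ->
  (forall (u : 'cV[R]_n) (lam : R), u != 0 -> V^T *m u = 0 ->
     M *m u = lam *: u -> forall i, lam <= d ord0 i) ->
  [/\ lambda_max M = d ord0 ord0, bil M (col ord0 V) (col ord0 V) = d ord0 ord0
    & nrm2 (col ord0 V) = 1].
Proof.
move=> sM VV MV dord dmax.
have npos : (0 < n)%N.
  case: (posnP n) => // n0; move/matrixP: VV => /(_ ord0 ord0); rewrite !mxE.
  rewrite big1 => [/eqP|i _]; first by rewrite eq_sym oner_eq0.
  by exfalso; have := ltn_ord i; move: (nat_of_ord i) => x; rewrite n0.
set v := col ord0 V.
have ev : v = V *m delta_mx ord0 ord0 by rewrite /v colE.
have nv : nrm2 v = 1.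
  by rewrite /nrm2 ev trmx_mul -mulmxA (mulmxA V^T) VV mul1mx delta_nrm.
have bv : bil M v v = d ord0 ord0.
  rewrite /bil ev trmx_mul -!mulmxA (mulmxA M) MV -mulmxA diag_delta -scalemxAr.
  by rewrite -scalemxAr (mulmxA V^T) VV mul1mx -scalemxAr mxE delta_nrm mulr1.
split=> //.
apply/le_anti/andP; split; last first.
  by have := lmax_rayleigh sM v; rewrite nv mulr1 bv.
have [u [un0 Mu]] := lmax_eig' npos sM.
set lam := lambda_max M in Mu *.
pose w := V^T *m u.
pose up := u - V *m w.
have VtM : V^T *m M = diag_mx d *m V^T by rewrite -sM -trmx_mul MV trmx_mul tr_diag_mx.
have Dw : diag_mx d *m w = lam *: w.
  by rewrite /w mulmxA -VtM -mulmxA Mu -scalemxAr.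
have Mup : M *m up = lam *: up.
  by rewrite /up mulmxBr Mu mulmxA MV -mulmxA Dw -scalemxAr scalerBr.
have Vup : V^T *m up = 0.
  by rewrite /up mulmxBr mulmxA VV mul1mx subrr.
clearbody w.
have [up0|upn0] := eqVneq up 0; last exact: (dmax up lam upn0 Vup Mup).
have eu : u = V *m w by apply/eqP; rewrite -subr_eq0 -/up up0.
have wn0 : w != 0 by apply: contra un0 => /eqP w0; apply/eqP; rewrite eu w0 mulmx0.
have [j wj] : exists j, w j ord0 != 0.
  apply/existsP; apply: contraR wn0 => /existsPn h; apply/eqP/matrixP => a c.
  by rewrite (ord1 c) [RHS]mxE; move/negPn/eqP: (h a).
move/matrixP: Dw => /(_ j ord0); rewrite mul_diag_mx !mxE => hh; rewrite -(mulIf wj hh).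
exact: dord.
Qed.


Lemma rank1_What n k rho (Wb : 'M[R]_n) (Pn : 'M[R]_(n, k)) (v : 'cV[R]_n) :
  0 <= rho -> Pn *m Pn^T *m v = v -> nrm2 v = 1 ->
  What rho Wb Pn (rho *: (v *m v^T)).
Proof.
move=> r0 pv nv; exists 0, (rho *: ((Pn^T *m v) *m (Pn^T *m v)^T)); split.
- exact: psdZ (psd_rank1 _).
- by [].
- rewrite add0r mxtraceZ mxtrace_mulC trace_mx11 -/(nrm2 (Pn^T *m v)).
  have -> : nrm2 (Pn^T *m v) = 1.
    by rewrite /nrm2 trmx_mul trmxK -mulmxA (mulmxA Pn) pv.
  by rewrite mulr1.
- rewrite scale0r add0r -scalemxAr -scalemxAl; congr (_ *: _).
  by rewrite !mulmxA pv -mulmxA -trmx_mul mulmxA pv.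
Qed.

Lemma bilNm n (M : 'M[R]_n) v w : bil (- M) v w = - bil M v w.
Proof. by rewrite /bil mulmxN mulNmx mxE. Qed.

Lemma inner_rank1 n (v : 'cV[R]_n) Y : inner (v *m v^T) Y = bil Y v v.
Proof. exact: tr_rank1. Qed.

End Basics.

Theorem mainTheorem5 (R : realType) (n m r rp rc k : nat)
  (C : 'M[R]_n) (A : 'I_m -> 'M[R]_n) (b : 'cV[R]_m)
  (rho alpha : R) (Omega Wbar : 'M[R]_n) (P : 'M[R]_(n, r))
  (Wst : 'M[R]_n) (yst : 'cV[R]_m) (gst : R) (Sst : 'M[R]_r)
  (Q1 : 'M[R]_(r, rp)) (Q2 : 'M[R]_(r, r - rp))
  (s1 : 'rV[R]_rp) (s2 : 'rV[R]_(r - rp))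
  (V : 'M[R]_(n, rc.+1)) (d : 'rV[R]_(rc.+1))
  (Pn : 'M[R]_(n, k)) :
  (* data *)
  C^T = C -> (forall i, (A i)^T = A i) ->
  (forall y : 'cV[R]_m, Astar A y = 0 -> y = 0) ->
  0 < rho -> 0 < alpha ->
  Omega^T = Omega ->
  psd Wbar -> \tr Wbar = 1 ->
  P^T *m P = 1%:M ->
  (rp <= r)%N ->
  (* (Wst, yst) minimizes the dual subproblem *)
  What rho Wbar P Wst ->
  (forall W y, What rho Wbar P W ->
     dual_obj A b C Omega alpha Wst yst <= dual_obj A b C Omega alpha W y) ->
  Wst = gst *: Wbar + P *m Sst *m P^T ->
  psd Sst -> 0 <= gst -> gst + \tr Sst <= rho ->
  let Xst := Omega + alpha^-1 *: (Wst - C + Astar A yst) in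
  (* eigendecomposition of Sst, Sigma1 holding the rp largest eigenvalues *)
  Q1^T *m Q1 = 1%:M -> Q2^T *m Q2 = 1%:M -> Q1^T *m Q2 = 0 ->
  Sst = Q1 *m diag_mx s1 *m Q1^T + Q2 *m diag_mx s2 *m Q2^T ->
  (forall i j, s2 ord0 j <= s1 ord0 i) ->
  (* V : orthonormal eigenvectors of -Xst for its rc.+1 largest eigenvalues,
     listed in nonincreasing order *)
  V^T *m V = 1%:M ->
  (- Xst) *m V = V *m diag_mx d ->
  (forall i j : 'I_rc.+1, (i <= j)%N -> d ord0 j <= d ord0 i) ->
  (forall (u : 'cV[R]_n) (lam : R), u != 0 -> V^T *m u = 0 ->
     (- Xst) *m u = lam *: u -> forall i, lam <= d ord0 i) ->
  (* new basis P_{t+1} *)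
  Pn^T *m Pn = 1%:M ->
  (Pn^T == (row_mx V (P *m Q1))^T)%MS ->
  0 < gst + \tr (diag_mx s2) ->
  let Wbarn := (gst + \tr (diag_mx s2))^-1 *:
                 (gst *: Wbar + P *m Q2 *m diag_mx s2 *m Q2^T *m P^T) in
  let v := col ord0 V in
  let g := if 0 < lambda_max (- Xst) then C - rho *: (v *m v^T) else C in
  (* (i) *)
  (forall X : 'M[R]_n, X^T = X -> Fhat C rho Wbarn Pn X <= Fobj C rho X)
  (* (ii) *)
  /\ (forall X : 'M[R]_n, X^T = X ->
        Fobj C rho Xst + inner g (X - Xst) <= Fhat C rho Wbarn Pn X)
  (* (ii'): g is a subgradient of F at Xst *)
  /\ (forall X : 'M[R]_n, X^T = X ->
        Fobj C rho Xst + inner g (X - Xst) <= Fobj C rho X)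
  (* (iii) *)
  /\ (forall X : 'M[R]_n, X^T = X -> Aop A X = b ->
        Fhat C rho Wbar P Xst + inner (alpha *: (Omega - Xst)) (X - Xst)
          <= Fhat C rho Wbarn Pn X).

Proof.
move=> sC sA Ainj rho0 alpha0 sO pWb tWb PP rpr hWst opt eWst pS g0 hg Xst
  QQ1 QQ2 Q12 eS s12 VV MV dord dmax PnPn colsp c0 Wbarn v g.
have r0 : 0 <= rho by exact: ltW.
have Q21 : Q2^T *m Q1 = 0 by rewrite -[Q1]trmxK -trmx_mul Q12 trmx0.
have eD1 : Q1^T *m Sst *m Q1 = diag_mx s1.
  rewrite eS mulmxDr mulmxDl !mulmxA QQ1 Q12 mul1mx !mul0mx addr0.
  by rewrite -(mulmxA _ Q1^T) QQ1 mulmx1.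
have eD2 : Q2^T *m Sst *m Q2 = diag_mx s2.
  rewrite eS mulmxDr mulmxDl !mulmxA QQ2 Q21 mul1mx !mul0mx add0r.
  by rewrite -(mulmxA _ Q2^T) QQ2 mulmx1.
have pD1 : psd (diag_mx s1) by rewrite -eD1 -{2}(trmxK Q1); exact: psd_congr.
have pD2 : psd (diag_mx s2) by rewrite -eD2 -{2}(trmxK Q2); exact: psd_congr.
have tS : \tr Sst = \tr (diag_mx s1) + \tr (diag_mx s2).
  by rewrite eS mxtraceD !(mxtrace_mulC (_ *m _)) !mulmxA QQ1 QQ2 !mul1mx.
set D1 := diag_mx s1 in eD1 pD1 tS *. set D2 := diag_mx s2 in eD2 pD2 tS c0 Wbarn *.
set cc := gst + \tr D2 in c0 Wbarn *.
have ePS : P *m Sst *m P^T = (P *m Q1) *m D1 *m (P *m Q1)^T + (P *m Q2) *m D2 *m (P *m Q2)^T.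
  by rewrite eS mulmxDr mulmxDl !trmx_mul !mulmxA.
have eWn : P *m Q2 *m D2 *m Q2^T *m P^T = (P *m Q2) *m D2 *m (P *m Q2)^T.
  by rewrite trmx_mul !mulmxA.
have PQ2 : (P *m Q2)^T *m (P *m Q2) = 1%:M.
  by rewrite trmx_mul -(mulmxA Q2^T) (mulmxA P^T) PP mul1mx QQ2.
have PQ1 : (P *m Q1)^T *m (P *m Q1) = 1%:M.
  by rewrite trmx_mul -(mulmxA Q1^T) (mulmxA P^T) PP mul1mx QQ1.
have pWn : psd Wbarn.
  rewrite /Wbarn eWn; apply: psdZ; first by rewrite invr_ge0 ltW.
  apply: psdD; [exact: psdZ | exact: psd_congr].
have tWn : \tr Wbarn = 1.
  rewrite /Wbarn eWn mxtraceZ mxtraceD mxtraceZ tWb mulr1 mxtrace_mulC mulmxA PQ2 mul1mx.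
  by rewrite mulVf // gt_eqF.
have [sV sPQ1] : (V^T <= Pn^T)%MS /\ ((P *m Q1)^T <= Pn^T)%MS.
  case/andP: colsp => _; rewrite tr_row_mx col_mx_sub => /andP [h1 h2]; by split.
have projV := proj_col PnPn sV.
have projPQ1 := proj_col PnPn sPQ1.
pose Y1 := Pn^T *m (P *m Q1).
have Y1Y1 : Y1^T *m Y1 = 1%:M.
  by rewrite /Y1 (trmx_mul Pn^T) trmxK -!mulmxA (mulmxA Pn) projPQ1 PQ1.
have PnY1 : Pn *m Y1 = P *m Q1 by rewrite /Y1 mulmxA projPQ1.
clearbody Y1.
have hWst' : What rho Wbarn Pn Wst.
  exists cc, (Y1 *m D1 *m Y1^T); split.
  - exact: psd_congr.
  - by rewrite /cc addr_ge0 // trace_psd_ge0.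
  - rewrite mxtrace_mulC mulmxA Y1Y1 mul1mx.
    rewrite /cc -addrA [\tr D2 + _]addrC -tS; exact: hg.
  - have e : Pn *m (Y1 *m D1 *m Y1^T) *m Pn^T = (P *m Q1) *m D1 *m (P *m Q1)^T.
      by rewrite !mulmxA PnY1 -(mulmxA _ Y1^T Pn^T) -trmx_mul PnY1.
    rewrite e eWst /Wbarn scalerA mulfV ?gt_eqF // scale1r.
    by rewrite ePS eWn -addrA [_ + P *m Q1 *m _ *m _]addrC.
have a0 : alpha != 0 by rewrite gt_eqF.
have [pWst _] := What_psd pWb tWb PP hWst.
have sWst : Wst^T = Wst by case: pWst.
pose Z := Wst - C + Astar A yst.
have sZ : Z^T = Z by rewrite /Z linearD /= linearB /= sWst sC Astar_sym.
have eX : Xst = Omega + alpha^-1 *: Z by [].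
have sX : Xst^T = Xst by rewrite eX linearD /= linearZ /= sO sZ.
clearbody Xst.
have trZ Y : \tr (Z^T *m Y) = inner Y Z by rewrite sZ innerC.
have AX i : inner (A i) Xst = b i ord0.
  have h t : 0 <= t * (- vdot (b - Aop A Omega) (delta_mx i ord0) +
        alpha^-1 * \tr (Z^T *m Astar A (delta_mx i ord0))) +
        t ^+ 2 * ((2 * alpha)^-1 * frob2 (Astar A (delta_mx i ord0))).
    have := opt Wst (yst + t *: delta_mx i ord0) hWst.
    by rewrite dual_y_exp // -addrA lerDl.
  have := quad_zero _ h; rewrite vdot_delta Astar_delta trZ !mxE.
  rewrite eX innerDr innerZr => e.
  have : 0 <= (2 * alpha)^-1 * frob2 (A i).
    by rewrite mulr_ge0 ?frob2_ge0 // invr_ge0 mulr_ge0 // ltW.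
  move=> /e; lra.
have optW W' : What rho Wbar P W' -> 0 <= inner (W' - Wst) Xst.
  move=> [g' [S' [pS' g'0 hg' eW']]].
  have hW t : 0 < t -> t <= 1 -> What rho Wbar P (Wst + t *: (W' - Wst)).
    move=> t0 t1; exists (gst + t * (g' - gst)), (Sst + t *: (S' - Sst)); split.
    - have -> : Sst + t *: (S' - Sst) = (1 - t) *: Sst + t *: S'.
        by apply/matrixP => i j; rewrite !mxE; ring.
      apply: psdD; apply: psdZ => //; lra.
    - nra.
    - rewrite mxtraceD mxtraceZ linearB /=; nra.
    - rewrite eWst eW' mulmxDr mulmxDl -scalemxAr -scalemxAl mulmxBr mulmxBl.
      set X1 := P *m Sst *m P^T; set X2 := P *m S' *m P^T.
      apply/matrixP => i j; rewrite !mxE; ring.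
  have h t : 0 < t -> t <= 1 -> 0 <= t * (inner (W' - Wst) Omega +
        alpha^-1 * \tr (Z^T *m (W' - Wst))) + t ^+ 2 * ((2 * alpha)^-1 * frob2 (W' - Wst)).
    move=> t0 t1; have := opt _ yst (hW t t0 t1).
    by rewrite dual_W_exp // -addrA lerDl.
  have := quad_pos _ h; rewrite trZ eX innerDr innerZr => e.
  have : 0 <= (2 * alpha)^-1 * frob2 (W' - Wst).
    by rewrite mulr_ge0 ?frob2_ge0 // invr_ge0 mulr_ge0 // ltW.
  by move=> /e.
have FhatXst : Fhat C rho Wbar P Xst <= inner C Xst + inner Wst (- Xst).
  rewrite /Fhat lerD2l; apply: my_sup_le; last by exists Wst.
  move=> y [W' hW' <-]; have := optW W' hW'.
  rewrite innerBl !innerNr; lra.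
have sMX : (- Xst)^T = - Xst by rewrite linearN /= sX.
have [lmx bv nv] := top_eig sMX VV MV dord dmax.
have pv : Pn *m Pn^T *m v = v by rewrite /v colE mulmxA projV.
have hvW := rank1_What Wbarn r0 pv nv.
rewrite -/v in bv nv.
rewrite bilNm in bv.
have inner0 (Y : 'M[R]_n) : inner 0 Y = 0 by rewrite /inner mul0mx linear0.
have hle (x : R) : ~~ (0 < x) -> x <= 0 by rewrite ltNge negbK.
split.
  move=> X sX'; exact: Fhat_le.
split.
  move=> X sX'; rewrite /g /Fobj; case: ifPn => hl.
    have hh := (Fhat_ge C r0 pWn tWn PnPn sX' hvW). apply: le_trans _ hh.
    rewrite (max_l (ltW hl)) innerBl !innerZl !inner_rank1 bilBm bilNm !innerBr lmx.
    rewrite -bv le_eqVlt; apply/orP; left; apply/eqP; ring.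
  rewrite (max_r (hle _ hl)) mulr0 addr0.
  apply: le_trans _ (Fhat_ge C r0 pWn tWn PnPn sX' (What0 Wbarn Pn r0)).
  by rewrite inner0 addr0 innerBr subrKC.
split.
  move=> X sX'; rewrite /g /Fobj; case: ifPn => hl.
    rewrite (max_l (ltW hl)) innerBl !innerZl !inner_rank1 bilBm !innerBr lmx.
    have sNX : (- X)^T = - X by rewrite linearN /= sX'.
    have := lmax_rayleigh sNX v; rewrite nv mulr1 bilNm => h0.
    have h1 : - bil X v v <= Num.max (lambda_max (- X)) 0 := le_trans h0 (le_max_l _).
    have := ler_wpM2l r0 h1; rewrite -bv.
    have -> : inner C Xst + rho * - bil Xst v v + (inner C X - inner C Xst -
      rho * (bil X v v - bil Xst v v)) = inner C X + rho * - bil X v v by ring.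
    by rewrite lerD2l.
  rewrite (max_r (hle _ hl)) mulr0 addr0 innerBr subrKC lerDl.
  exact: mulr_ge0 r0 (max_ge0 _).
move=> X sX' AXb.
apply: le_trans _ (Fhat_ge C r0 pWn tWn PnPn sX' hWst').
apply: le_trans (lerD FhatXst (lexx _)) _.
have eaz : alpha *: (Omega - Xst) = - Z.
  by rewrite eX opprD addrA subrr add0r scalerN scalerA mulfV // scale1r.
have iA : inner (Astar A yst) (X - Xst) = 0.
  rewrite inner_Astar big1 // => i _; rewrite innerBr AX.
  have := congr1 (fun M : 'cV[R]_m => M i ord0) AXb; rewrite mxE /= => ->.
  by rewrite subrr mulr0.
rewrite eaz /Z innerNl innerDl innerBl iA !innerBr !innerNr; lra.
Qed.
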